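(* Let $p$ be an odd prime. If $M$ is a discrete $A$-module, then $M$, with the $R$-action obtained by restriction along the inclusion $R\subset A$, is a Bousfield module.
   Context: $\mathbb{Z}_{(p)}$ denotes the $p$-local integers. $A$ is the ring of degree zero stable operations in $p$-local complex $K$-theory. Fix $q$ primitive mod $p^2$, $\Psi^q\in A$ the Adams operation, $q_i=q^{(-1)^i\lfloor i/2\rfloor}$, $\Theta_n(X)=\prod_{i=1}^n(X-q_i)$, $\Phi_n=\Theta_n(\Psi^q)$; every element of $A$ is uniquely a convergent sum $\sum_{n\ge0}a_n\Phi_n$ with $a_n\in\mathbb{Z}_{(p)}$, and $A_m=\{\sum_{n\ge m}a_n\Phi_n\}$. An $A$-module $M$ is discrete if each $x\in M$ satisfies $A_nx=0$ for some $n$. Let $R=\mathbb{Z}_{(p)}[\mathbb{Z}_{(p)}^\times]$, writing $\Psi^j$ for $j\in\mathbb{Z}_{(p)}^\times$; mapping $\Psi^j$ to the Adams operation $\Psi^j\in A$ gives $R\subset A$. A Bousfield module is an $R$-module $M$ such that for each $x\in M$: (a) $Rx$ is finitely generated over $\mathbb{Z}_{(p)}$; (b) for each $j\in\mathbb{Z}_{(p)}^\times$, $\Psi^j$ acts on $Rx\otimes\mathbb{Q}$ by a diagonalisable matrix whose eigenvalues are integer powers of $j$; (c) for each $m\ge1$ the action of $\mathbb{Z}_{(p)}^\times$ on $Rx/p^mRx$ factors through $\mathbb{Z}_{(p)}^\times\to(\mathbb{Z}/p^k\mathbb{Z})^\times$ for sufficiently large $k$. *)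

(* Defs.v *)
From HB Require Import structures.
Set Implicit Arguments. Unset Strict Implicit. Unset Printing Implicit Defensive.
From mathcomp Require Import all_boot all_order all_algebra ring.
Import Order.TTheory GRing.Theory Num.Theory.
Local Open Scope ring_scope.
Lemma denq_dvd (x : rat) (d : int) :
  (exists m : int, x * d%:~R = m%:~R) -> (denq x %| d)%Z.
Proof.
move=> [m hm].
have e : numq x * d = m * denq x.
  apply: (@intr_inj rat). rewrite !intrM numqE -hm. by rewrite mulrAC.
have : (denq x %| numq x * d)%Z by rewrite e dvdz_mull.
rewrite Gauss_dvdzr //.
rewrite coprimezE. have := coprime_num_den x. by rewrite coprime_sym.
Qed.
Definition plocal (p : nat) : {pred rat} := fun x => coprime p `|denq x|%N.

Lemma plocal_dvd (p : nat) (x : rat) (d : int) :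
  coprime p `|d|%N -> (exists m : int, x * d%:~R = m%:~R) ->
  x \in plocal p.
Proof.
move=> cd h; have := @denq_dvd x d h.
rewrite /plocal unfold_in /= dvdzE => dv.
exact: coprime_dvdr dv cd.
Qed.

Fact plocal_subring (p : nat) : subring_closed (plocal p).
Proof.
split.
- by rewrite /plocal unfold_in; exact: coprimen1.
- move=> x y hx hy.
  apply: (@plocal_dvd p _ (denq x * denq y)).
    by rewrite abszM coprimeMr; apply/andP; split.
  exists (numq x * denq y - numq y * denq x).
  rewrite intrB !intrM !numqE. ring.
- move=> x y hx hy.
  apply: (@plocal_dvd p _ (denq x * denq y)).
    by rewrite abszM coprimeMr; apply/andP; split.
  exists (numq x * numq y).
  rewrite !intrM !numqE. ring.
Qed.

HB.instance Definition _ (p : nat) :=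
  GRing.isSubringClosed.Build rat (plocal p) (plocal_subring p).

Record Zpl (p : nat) := MkZp { zval : rat; zvalP : zval \in plocal p }.
HB.instance Definition _ (p : nat) := [isSub for @zval p].
HB.instance Definition _ (p : nat) := [Choice of Zpl p by <:].
HB.instance Definition _ (p : nat) := [SubChoice_isSubComNzRing of Zpl p by <:].

Section Defs.
Variable p : nat.
Variable q : int.   (* the fixed q, primitive mod p^2 *)
Local Notation Zpl := (Zpl p).

Definition zunit (j : Zpl) : bool :=
  (zval j != 0) && coprime p `|numq (zval j)|%N.

(* inverse of a unit (junk value 0 on non-units) *)
Definition zinv (j : Zpl) : Zpl := insubd 0 (zval j)^-1.

Definition zpow (j : Zpl) (k : int) : Zpl :=
  match k with
  | Posz n => j ^+ n
  | Negz n => zinv j ^+ n.+1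
  end.

(* exponents e_i with q_i = q ^ e_i, e_i = (-1)^i floor(i/2) *)
Definition qexp (i : nat) : int :=
  if odd i then - (Posz i./2) else Posz i./2.

Definition qnode (i : nat) : Zpl := zpow (q%:~R) (qexp i).

Definition Theta (n : nat) : {poly Zpl} :=
  \prod_(1 <= i < n.+1) ('X - (qnode i)%:P).

(* An element of Aop is given by its coefficient sequence (a_n) in the
   unique expansion  sum_{n>=0} a_n Phi_n,  Phi_n = Theta_n(Psi^q). *)
Definition Aop := nat -> Zpl.

Definition Aadd (a b : Aop) : Aop := fun n => a n + b n.
Definition Ascale (c : Zpl) (a : Aop) : Aop := fun n => c * a n.
Definition Aone : Aop := fun n => if n == 0%N then 1 else 0.

(* Newton coefficients: the k-th coefficient of a polynomial P written in
   the basis Theta_0, Theta_1, ... (nodes starting at q_i). *)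
Fixpoint newton (i : nat) (P : {poly Zpl}) (k : nat) : Zpl :=
  match k with
  | 0%N => P.[qnode i]
  | k'.+1 => newton i.+1
               (Pdiv.Ring.rdivp (P - (P.[qnode i])%:P) ('X - (qnode i)%:P)) k'
  end.

Definition Atrunc (a : Aop) (k : nat) : {poly Zpl} :=
  \sum_(n < k.+1) a n *: Theta n.

(* product in Aop (composition of operations): the coefficient of Phi_k of
   a*b only depends on the truncations at k, since A_{k+1} is an ideal *)
Definition Amul (a b : Aop) : Aop := fun k => newton 1 (Atrunc a k * Atrunc b k) k.

(* action of a in Aop on pi_{2k}(KU_(p)) = Z_(p): Phi_n acts by Theta_n(q^k);
   the sum is finite because Theta_n(q^k) = 0 for n >= 2|k|+1 *)
Definition Aev (k : int) (a : Aop) : Zpl :=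
  \sum_(n < (2 * `|k|).+2) a n * (Theta n).[zpow (q%:~R) k].

(* psi : Z_(p) -> Aop gives the Adams operations Psi^j (j a unit): Psi^j is
   the stable operation acting on pi_{2k} by multiplication by j^k *)
Definition adams_ops (psi : Zpl -> Aop) : Prop :=
  forall j, zunit j -> forall k : int, Aev k (psi j) = zpow j k.

Definition Amodule (M : lmodType Zpl) (act : Aop -> M -> M) : Prop :=
  [/\ (forall a x y, act a (x + y) = act a x + act a y),
      (forall a b x, act (Aadd a b) x = act a x + act b x),
      (forall c a x, act (Ascale c a) x = c *: act a x),
      (forall x, act Aone x = x) &
      (forall a b x, act (Amul a b) x = act a (act b x))].

Definition inAfilt (n : nat) (a : Aop) : Prop := forall m, (m < n)%N -> a m = 0.

Definition discrete_Amodule (M : lmodType Zpl) (act : Aop -> M -> M) : Prop :=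
  Amodule act /\ forall x : M, exists n, forall a, inAfilt n a -> act a x = 0.

Section Bousfield.
Variables (M : lmodType Zpl) (Psi : Zpl -> M -> M).

(* R-module structure: Z_(p)[Z_(p)^x] acting through Psi *)
Definition Rmodule : Prop :=
  [/\ (forall j, zunit j -> forall x y, Psi j (x + y) = Psi j x + Psi j y),
      (forall j, zunit j -> forall c x, Psi j (c *: x) = c *: Psi j x),
      (forall x, Psi 1 x = x) &
      (forall j j', zunit j -> zunit j' -> forall x, Psi (j * j') x = Psi j (Psi j' x))].

Definition inRx (x y : M) : Prop :=
  exists s : seq (Zpl * Zpl), all (fun cj => zunit cj.2) s /\
    y = \sum_(cj <- s) cj.1 *: Psi cj.2 x.

Definition inspan (g : seq M) (y : M) : Prop :=
  exists c : nat -> Zpl, y = \sum_(i < size g) c i *: nth 0 g i.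

(* y maps to 0 in (-) (x) Q *)
Definition torsion (y : M) : Prop := exists m : nat, (0 < m)%N /\ m%:R *: y = 0.

Definition bousfield_a (x : M) : Prop :=
  exists g : seq M, forall y, inRx x y <-> inspan g y.

(* (b) Psi^j acts diagonalisably on Rx (x) Q with eigenvalues integer powers
   of j: Rx (x) Q is spanned by eigenvectors (images of elements e of Rx with
   Psi^j e - j^k e torsion); every y (x) 1 is a Q-combination of them, which
   after clearing denominators reads: n y - sum e_i is torsion. *)
Definition bousfield_b (x : M) : Prop :=
  forall j, zunit j -> forall y, inRx x y ->
    exists n : nat, (0 < n)%N /\
    exists s : seq (M * int),
      (forall e, e \in s -> inRx x e.1 /\ torsion (Psi j e.1 - zpow j e.2 *: e.1))
      /\ torsion (n%:R *: y - \sum_(e <- s) e.1).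

(* (c) for each m >= 1, the action of Z_(p)^x on Rx / p^m Rx factors through
   (Z/p^k)^x for some k *)
Definition bousfield_c (x : M) : Prop :=
  forall m : nat, (1 <= m)%N -> exists k : nat,
    forall j j', zunit j -> zunit j' ->
      (exists c : Zpl, j - j' = (p ^ k)%:R * c) ->
      forall y, inRx x y ->
        exists z, inRx x z /\ Psi j y - Psi j' y = (p ^ m)%:R *: z.

Definition Bousfield_module : Prop :=
  Rmodule /\ forall x : M, [/\ bousfield_a x, bousfield_b x & bousfield_c x].

End Bousfield.

End Defs.

Definition primitive_mod (q : int) (n : nat) : Prop :=
  coprime `|q|%N n /\
  forall m : nat, (0 < m < totient n)%N -> ~ (q ^+ m = 1 %[mod n%:Z])%Z.

(* Main.v *)
Require Import Defs.
From HB Require Import structures.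
From mathcomp Require Import all_boot all_order all_algebra.
From mathcomp Require Import ring zify.
From Stdlib Require Import FunctionalExtensionality.
Import Order.TTheory GRing.Theory Num.Theory.
Local Open Scope ring_scope.
Set Implicit Arguments. Unset Strict Implicit. Unset Printing Implicit Defensive.


Section Z.
Variable p : nat.
Hypothesis pr : prime p.
Local Notation Z := (Zpl p).

Lemma zvalD (x y : Z) : zval (x + y) = zval x + zval y.
Proof. exact: (rmorphD (val : Z -> rat)). Qed.
Lemma zvalM (x y : Z) : zval (x * y) = zval x * zval y.
Proof. exact: (rmorphM (val : Z -> rat)). Qed.
Lemma zvalN (x : Z) : zval (- x) = - zval x.
Proof. exact: (rmorphN (val : Z -> rat)). Qed.
Lemma zvalB (x y : Z) : zval (x - y) = zval x - zval y.
Proof. exact: (rmorphB (val : Z -> rat)). Qed.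
Lemma zval1 : zval (1 : Z) = 1.
Proof. exact: (rmorph1 (val : Z -> rat)). Qed.
Lemma zval0 : zval (0 : Z) = 0.
Proof. exact: (rmorph0 (val : Z -> rat)). Qed.
Lemma zvalX (x : Z) n : zval (x ^+ n) = zval x ^+ n.
Proof. exact: (rmorphXn (val : Z -> rat)). Qed.
Lemma zval_int (z : int) : zval (z%:~R : Z) = z%:~R.
Proof. exact: (rmorph_int (val : Z -> rat)). Qed.
Lemma zval_nat (n : nat) : zval (n%:R : Z) = n%:R.
Proof. exact: (rmorph_nat (val : Z -> rat)). Qed.
Lemma zval_inj : injective (@zval p).
Proof. exact: val_inj. Qed.
Lemma zval_sum I (r : seq I) (P : pred I) (F : I -> Z) :
  zval (\sum_(i <- r | P i) F i) = \sum_(i <- r | P i) zval (F i).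
Proof. exact: (rmorph_sum (val : Z -> rat)). Qed.
Lemma zval_prod I (r : seq I) (P : pred I) (F : I -> Z) :
  zval (\prod_(i <- r | P i) F i) = \prod_(i <- r | P i) zval (F i).
Proof. exact: (rmorph_prod (val : Z -> rat)). Qed.

Lemma zval_eq0 (x : Z) : (zval x == 0) = (x == 0).
Proof. by rewrite -zval0 (inj_eq zval_inj). Qed.

Lemma zmul_eq0 (x y : Z) : x * y = 0 -> x = 0 \/ y = 0.
Proof.
move=> /(congr1 (@zval p)); rewrite zvalM zval0 => /eqP; rewrite mulf_eq0.
by case/orP => /eqP h; [left|right]; apply: zval_inj; rewrite h zval0.
Qed.

Lemma zmulIf (c x y : Z) : c != 0 -> c * x = c * y -> x = y.
Proof.
move=> c0 h; apply: zval_inj; move/(congr1 (@zval p)): h; rewrite !zvalM.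
by move/mulfI; apply; rewrite zval_eq0.
Qed.

Lemma inv_plocal (x : rat) : x != 0 -> coprime p `|numq x|%N -> x^-1 \in plocal p.
Proof.
move=> x0 cp; apply: (@plocal_dvd p _ (numq x)) => //.
exists (denq x).
have hx : x = (numq x)%:~R / (denq x)%:~R by rewrite divq_num_den.
have n0 : (numq x)%:~R != 0 :> rat by rewrite intr_eq0 numq_eq0.
have d0 : (denq x)%:~R != 0 :> rat by rewrite intr_eq0 denq_neq0.
by rewrite [X in X^-1]hx invf_div divfK.
Qed.

Lemma zunitP (j : Z) : zunit j <-> exists k : Z, j * k = 1.
Proof.
split.
- case/andP => j0 cp; exists (insubd 0 (zval j)^-1).
  apply: zval_inj; rewrite zvalM zval1 /insubd insubT ?inv_plocal //= => _.
  by rewrite mulfV.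
- case=> k /(congr1 (@zval p)); rewrite zvalM zval1 => h.
  have j0 : zval j != 0 by apply/eqP => e; move: h; rewrite e mul0r => /eqP; rewrite eq_sym oner_eq0.
  apply/andP; split => //.
  have e : numq (zval j) * numq (zval k) = denq (zval j) * denq (zval k).
    apply: (@intr_inj rat); rewrite !intrM.
    move: h; rewrite -{1}(divq_num_den (zval j)) -{1}(divq_num_den (zval k)).
    have d1 : (denq (zval j))%:~R != 0 :> rat by rewrite intr_eq0 denq_neq0.
    have d2 : (denq (zval k))%:~R != 0 :> rat by rewrite intr_eq0 denq_neq0.
    move: d1 d2.
    set a := (numq (zval j))%:~R; set b := (denq (zval j))%:~R.
    set c := (numq (zval k))%:~R; set d := (denq (zval k))%:~R.
    move=> d1 d2 h.
    have -> : a * c = (a / b * (c / d)) * (b * d) by field; apply/andP.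
    by rewrite h mul1r.
  have hj := zvalP j; have hk := zvalP k.
  move: hj hk; rewrite /plocal !unfold_in /= => hj hk.
  have : coprime p (absz (numq (zval j) * numq (zval k))) by rewrite e abszM coprimeMr hj hk.
  by rewrite abszM coprimeMr => /andP[].
Qed.

Lemma zunitM (j j' : Z) : zunit j -> zunit j' -> zunit (j * j').
Proof.
move=> /zunitP[k hk] /zunitP[k' hk']; apply/zunitP; exists (k * k').
by rewrite mulrACA hk hk' mulr1.
Qed.

Lemma zunit1 : zunit (1 : Z).
Proof. by apply/zunitP; exists 1; rewrite mulr1. Qed.

Lemma zunitX (j : Z) n : zunit j -> zunit (j ^+ n).
Proof. move=> u; elim: n => [|n IH]; [exact: zunit1| rewrite exprS; exact: zunitM]. Qed.

Lemma zunit_neq0 (j : Z) : zunit j -> zval j != 0.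
Proof. by case/andP. Qed.

Lemma zinvE (j : Z) : zunit j -> zval (zinv j) = (zval j)^-1.
Proof. by case/andP => j0 cp; rewrite /zinv /insubd insubT ?inv_plocal. Qed.

Lemma zpowE (j : Z) (k : int) : zunit j -> zval (zpow j k) = zval j ^ k.
Proof.
move=> u; case: k => n /=; first by rewrite zvalX.
by rewrite zvalX zinvE // exprVn.
Qed.

Lemma zinv_mul (j : Z) : zunit j -> zinv j * j = 1.
Proof.
move=> u; apply: zval_inj; rewrite zvalM zinvE // zval1 mulVf //; exact: zunit_neq0.
Qed.

Lemma zpowM (j j' : Z) k : zunit j -> zunit j' -> zpow (j * j') k = zpow j k * zpow j' k.
Proof.
move=> u u'; apply: zval_inj; rewrite zvalM !zpowE ?zunitM // zvalM expfzMl //.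
Qed.

Lemma zpow1 k : zpow (1 : Z) k = 1.
Proof. by apply: zval_inj; rewrite zpowE ?zunit1 // zval1 exp1rz. Qed.

Lemma zpowX (j : Z) (i : nat) k : zunit j -> zpow (j ^+ i) k = zpow j k ^+ i.
Proof.
move=> u; apply: zval_inj; rewrite zvalX !zpowE ?zunitX // zvalX.
change ((zval j ^ (Posz i)) ^ k = (zval j ^ k) ^ (Posz i)); exact: exprzAC.
Qed.

End Z.


Lemma pow_gt1 (m n : nat) : (1 < m)%N -> (0 < n)%N -> (1 < m ^ n)%N.
Proof.
move=> hm; elim: n => [//|n IH] _; rewrite expnS.
case: n IH => [|n] IH; first by rewrite expn0 muln1.
have := IH isT; nia.
Qed.

Section Q.
Variable p : nat.
Variable q : int.
Hypothesis pr : prime p.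
Hypothesis podd : odd p.
Hypothesis qprim : primitive_mod q (p ^ 2).
Local Notation Z := (Zpl p).
Local Notation Q := (q%:~R : Z).

Lemma p_ge3 : (3 <= p)%N.
Proof.
have := prime_gt1 pr; case: p podd => [|[|[|n]]] //.
Qed.

Lemma tot_big : (2 < totient (p ^ 2))%N.
Proof.
rewrite totient_pfactor // expn1; have := p_ge3.
case: p => [|n] //= h; nia.
Qed.

Lemma q_abs : (2 <= `|q|)%N.
Proof.
case: qprim => cp hm.
have hq1 : q != 1.
  apply/eqP => e; apply: (hm 1%N); first by rewrite /= (ltn_trans _ tot_big).
  by rewrite e expr1.
have hqm1 : q != -1.
  apply/eqP => e; apply: (hm 2%N); first by rewrite /= tot_big.
  by rewrite e sqrrN expr1n.
have hq0 : q != 0.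
  apply/eqP => e; move: cp; rewrite e /= /coprime gcd0n => /eqP h.
  have := p_ge3; have : (p ^ 2 = p * p)%N by rewrite expnS expn1. lia.
move: hq1 hqm1 hq0 => /eqP h1 /eqP h2 /eqP h3; lia.
Qed.

Lemma q_coprime : coprime p `|q|.
Proof.
case: qprim => cp _; rewrite coprime_sym.
by rewrite coprime_pexpr in cp.
Qed.

Lemma zval_Q : zval Q = q%:~R.
Proof. exact: zval_int. Qed.

Lemma q_neq0 : (q%:~R : rat) != 0.
Proof. rewrite intr_eq0; apply/eqP => e; have := q_abs; rewrite e. by []. Qed.

Lemma zunitQ : zunit Q.
Proof.
apply/andP; split; rewrite zval_Q ?q_neq0 //.
by rewrite numq_int q_coprime.
Qed.

Lemma qpow_one (d : int) : (q%:~R : rat) ^ d = 1 -> d = 0.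
Proof.
have key : forall n : nat, (0 < n)%N -> (q%:~R : rat) ^+ n != 1.
  move=> n n0; apply/eqP => h.
  have : (q ^+ n = 1)%R.
    apply: (@intr_inj rat); by rewrite rmorphXn /= h.
  move/(congr1 absz); rewrite abszX /= => e.
  by have := pow_gt1 (q_abs) n0; rewrite e.
case: d => n /= h.
- case: n h => [//|n] h; have h' : (q%:~R : rat) ^+ n.+1 = 1 := h.
  by move: (key n.+1 isT); rewrite h' eqxx.
- exfalso; move: h => /eqP; rewrite invr_eq1 => /eqP h.
  by move: (key n.+1 isT); rewrite h eqxx.
Qed.

Lemma qpow_inj (a b : int) : (q%:~R : rat) ^ a = (q%:~R : rat) ^ b -> a = b.
Proof.
move=> h; have u : (q%:~R : rat) \is a GRing.unit by rewrite unitfE q_neq0.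
have : (q%:~R : rat) ^ (a - b) = 1.
  by rewrite exprzDr // h -exprzDr // subrr expr0z.
by move/qpow_one/eqP; rewrite subr_eq0 => /eqP.
Qed.

Lemma qexp_inj (l l' : nat) : (0 < l)%N -> (0 < l')%N -> qexp l = qexp l' -> l = l'.
Proof.
rewrite /qexp => h h'.
case: (boolP (odd l)) => ol; case: (boolP (odd l')) => ol' //=.
- move/eqP; rewrite eqr_opp => /eqP [] e.
  by rewrite -(odd_double_half l) -(odd_double_half l') ol ol' e.
- move=> e; have : (l'./2 == 0)%N by move: e; case: (l'./2) => // n; case: (l./2).
  move=> /eqP e2; move: h'; rewrite -(odd_double_half l') e2 (negbTE ol') //.
- move=> e; have : (l./2 == 0)%N by move: e; case: (l./2) => // n; case: (l'./2).
  move=> /eqP e2; move: h; rewrite -(odd_double_half l) e2 (negbTE ol) //.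
- case=> e.
  by rewrite -(odd_double_half l) -(odd_double_half l') (negbTE ol) (negbTE ol') e.
Qed.

Lemma zval_qnode l : zval (qnode p q l) = (q%:~R : rat) ^ (qexp l).
Proof. by rewrite /qnode zpowE ?zunitQ // zval_Q. Qed.

Lemma qnode_inj (l l' : nat) : (0 < l)%N -> (0 < l')%N -> qnode p q l = qnode p q l' -> l = l'.
Proof.
move=> h h' /(congr1 (@zval p)); rewrite !zval_qnode => /qpow_inj; exact: qexp_inj.
Qed.

Lemma Theta_horner n (x : Z) : (Theta p q n).[x] = \prod_(1 <= i < n.+1) (x - qnode p q i).
Proof. by rewrite /Theta horner_prod; apply: eq_bigr => i _; rewrite hornerXsubC. Qed.

Lemma Theta_vanish n l : (0 < l)%N -> (l <= n)%N -> (Theta p q n).[qnode p q l] = 0.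
Proof.
move=> l0 ln; rewrite Theta_horner (big_cat_nat _ (n:=l.+1)) //=;

by rewrite big_nat_recr //= subrr mulr0 mul0r.
Qed.

Lemma Theta_neq0 n l : (n < l)%N -> (Theta p q n).[qnode p q l] != 0.
Proof.
move=> nl; rewrite Theta_horner -zval_eq0 zval_prod.
rewrite prodf_seq_neq0; apply/allP => i; rewrite mem_index_iota => /andP[i1 i2] /=.
rewrite subr_eq0; apply/eqP => /zval_inj e.
have l0 : (0 < l)%N by apply: leq_ltn_trans (leq0n _) (leq_ltn_trans i1 (leq_trans i2 nl)).
have := qnode_inj l0 i1 e => e2; move: i2; rewrite -e2 => i2.
by have := leq_trans i2 nl; rewrite ltnn.
Qed.

End Q.


Section N.
Variable p : nat.
Variable q : int.
Local Notation Z := (Zpl p).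
Local Notation node := (qnode p q).
Local Notation Th := (Theta p q).

Definition NT (i n : nat) : {poly Z} := \prod_(i <= l < i + n) ('X - (node l)%:P).

Lemma NT0 i : NT i 0 = 1.
Proof. by rewrite /NT addn0 big_geq. Qed.

Lemma NT_rec i n : NT i n.+1 = ('X - (node i)%:P) * NT i.+1 n.
Proof. by rewrite /NT big_ltn ?addnS ?addSn // ltnS leq_addr. Qed.

Lemma NT_add i a b : NT i (a + b) = NT i a * NT (i + a) b.
Proof. by rewrite /NT addnA (big_cat_nat _ (n:=i+a)) // leq_addr. Qed.

Lemma Theta_NT n : Th n = NT 1 n.
Proof. by rewrite /Theta /NT add1n. Qed.

Lemma NT_vanish i n : (0 < n)%N -> (NT i n).[node i] = 0.
Proof. by case: n => // n _; rewrite NT_rec hornerM hornerXsubC subrr mul0r. Qed.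

Lemma regroup (d : nat -> Z) i K N : (K <= N)%N ->
  \sum_(m < N) d m *: NT i m =
  \sum_(m < K) d m *: NT i m + NT i K * \sum_(K <= m < N) d m *: NT (i + K) (m - K).
Proof.
move=> KN; rewrite -!(big_mkord xpredT (fun m => d m *: NT i m)) (big_cat_nat _ (n:=K)) //=; congr (_ + _).
rewrite mulr_sumr; apply: eq_big_nat => m /andP[h1 h2].
by rewrite -scalerAr -NT_add subnKC.
Qed.

Lemma newton_uniq k : forall i (P : {poly Z}) (d : nat -> Z) K R, (k < K)%N ->
  P = \sum_(n < K) d n *: NT i n + NT i K * R -> newton q i P k = d k.
Proof.
have base : forall i (P : {poly Z}) (d : nat -> Z) K R, (0 < K)%N ->
    P = \sum_(n < K) d n *: NT i n + NT i K * R -> P.[node i] = d 0%N.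
  move=> i P d [//|K] R _ ->.
  rewrite hornerD hornerM NT_vanish // mul0r addr0 big_ord_recl /= NT0 hornerD.
  rewrite horner_sum big1 ?addr0 => [|j _]; last by rewrite hornerZ NT_vanish // mulr0.
  by rewrite hornerZ hornerC mulr1.
elim: k => [|k IH] i P d K R kK eP /=; first exact: base eP.
case: K kK eP => [//|K] kK eP.
have e0 := base _ _ _ _ _ (ltn0Sn K) eP.
set R' := \sum_(n < K) d n.+1 *: NT i.+1 n + NT i.+1 K * R.
have eQ : P - (P.[node i])%:P = R' * ('X - (node i)%:P).
  rewrite e0 eP big_ord_recl /= NT0 NT_rec /R'.
  have -> : \sum_(n < K) d (bump 0 n) *: NT i (bump 0 n) =
            (\sum_(n < K) d n.+1 *: NT i.+1 n) * ('X - (node i)%:P).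
    rewrite mulr_suml; apply: eq_bigr => j _.
    by rewrite /bump /= add1n NT_rec -scalerAl mulrC.
  rewrite !alg_polyC; ring.
rewrite eQ Pdiv.RingMonic.rdivp_mull ?monicXsubC //.
exact: (IH i.+1 R' (fun n => d n.+1) K R).
Qed.

Lemma newton_uniq' k i (P : {poly Z}) (d : nat -> Z) K N R : (k < K)%N -> (K <= N)%N ->
  P = \sum_(n < N) d n *: NT i n + NT i K * R -> newton q i P k = d k.
Proof.
move=> kK KN eP; apply: (newton_uniq (K:=K) (R := \sum_(K <= m < N) d m *: NT (i + K) (m - K) + R)) => //.
by rewrite eP (regroup _ _ KN) mulrDr addrA.
Qed.

Lemma expand K : forall i (P : {poly Z}), exists (d : nat -> Z) (R : {poly Z}),
  P = \sum_(n < K) d n *: NT i n + NT i K * R.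
Proof.
elim: K => [|K IH] i P.
  by exists (fun _ => 0), P; rewrite big_ord0 NT0 add0r mul1r.
have : root (P - (P.[node i])%:P) (node i) by rewrite /root hornerD hornerN hornerC subrr.
case/factor_theorem => Q eQ.
have [d [R eR]] := IH i.+1 Q.
exists (fun n => if n is n'.+1 then d n' else P.[node i]), R.
rewrite big_ord_recl /= NT0 NT_rec.
have -> : \sum_(n < K) d n *: NT i (bump 0 n) =
          ('X - (node i)%:P) * \sum_(n < K) d n *: NT i.+1 n.
  rewrite mulr_sumr; apply: eq_bigr => j _.
  by rewrite /bump /= add1n NT_rec -scalerAr.
have eP : P = (P.[node i])%:P + Q * ('X - (node i)%:P) by rewrite -eQ addrC subrK.
move: eP; set c0 := P.[node i] => eP.
rewrite {1}eP eR !alg_polyC; ring.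
Qed.

End N.


Section S.
Variable p : nat.
Variable q : int.
Hypothesis pr : prime p.
Hypothesis podd : odd p.
Hypothesis qprim : primitive_mod q (p ^ 2).
Local Notation Z := (Zpl p).
Local Notation node := (qnode p q).
Local Notation Th := (Theta p q).
Local Notation A := (Aop p).

Definition nsum (l : nat) (a : A) : Z := \sum_(i < l) a i * (Th i).[node l].

Lemma wide_sum l N (a : A) : (0 < l)%N -> (l <= N)%N ->
  \sum_(i < N) a i * (Th i).[node l] = nsum l a.
Proof.
move=> l0 lN; rewrite /nsum (big_ord_widen N (fun i => a i * (Th i).[node l]) lN).
rewrite [RHS]big_mkcond; apply: eq_bigr => i _; case: ifP => // /negbT.
by rewrite -leqNgt => h; rewrite Theta_vanish ?mulr0.
Qed.

Lemma Aev_node l (a : A) : (0 < l)%N -> Aev q (qexp l) a = nsum l a.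
Proof.
move=> l0; rewrite /Aev; apply: wide_sum => //.
have -> : `|qexp l|%N = l./2 by rewrite /qexp; case: (odd l); rewrite ?abszN.
by rewrite -{1}(odd_double_half l) -muln2; case: (odd l); lia.
Qed.

Lemma nsum_trunc l K (a : A) : (0 < l)%N -> (l <= K.+1)%N ->
  (Atrunc q a K).[node l] = nsum l a.
Proof.
move=> l0 lK; rewrite /Atrunc horner_sum -(wide_sum a l0 lK).
by apply: eq_bigr => i _; rewrite hornerZ.
Qed.

Lemma nsumD l (a b : A) : nsum l (Aadd a b) = nsum l a + nsum l b.
Proof. by rewrite /nsum -big_split; apply: eq_bigr => i _; rewrite mulrDl. Qed.

Lemma nsumZ l c (a : A) : nsum l (Ascale c a) = c * nsum l a.
Proof. by rewrite /nsum mulr_sumr; apply: eq_bigr => i _; rewrite mulrA. Qed.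

Lemma nsumB l (a b : A) : nsum l (fun n => a n - b n) = nsum l a - nsum l b.
Proof. by rewrite /nsum -sumrB; apply: eq_bigr => i _; rewrite mulrBl. Qed.

Lemma nsum_sum I (s : seq I) (F : I -> A) l :
  nsum l (fun m => \sum_(x <- s) F x m) = \sum_(x <- s) nsum l (F x).
Proof.
rewrite /nsum; under eq_bigr do rewrite mulr_suml.
exact: exchange_big.
Qed.

Lemma nsum_one l : (0 < l)%N -> nsum l (Aone p) = 1.
Proof.
case: l => // l _; rewrite /nsum big_ord_recl /= big1 ?addr0.
  by rewrite /Theta big_geq // hornerC mul1r.
by move=> i _; rewrite /Aone /= mul0r.
Qed.

Lemma tri n (a : A) : (forall l, (0 < l)%N -> (l <= n)%N -> nsum l a = 0) ->
  forall i, (i < n)%N -> a i = 0.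
Proof.
elim: n => [//|n IH] h i.
have h' : forall i, (i < n)%N -> a i = 0.
  by apply: IH => l l0 ln; apply: h => //; apply: leqW.
rewrite ltnS leq_eqVlt => /orP[/eqP ->|]; last exact: h'.
have := h n.+1 isT (leqnn _); rewrite /nsum big_ord_recr /= big1 ?add0r.
  case/zmul_eq0 => // e; by move: (Theta_neq0 pr podd qprim (ltnSn n)); rewrite e eqxx.
by move=> j _; rewrite h' ?mul0r.
Qed.

Lemma Amul_node l (a b : A) : (0 < l)%N -> nsum l (Amul q a b) = nsum l a * nsum l b.
Proof.
move=> l0; set K := l.-1.
have lK : l = K.+1 by rewrite /K prednK.
set P := Atrunc q a K * Atrunc q b K.
have [d [R eP]] := expand q l 1 P.
have split_tr : forall (c : A) n, (n <= K)%N -> exists S, Atrunc q c K = Atrunc q c n + NT p q 1 n.+1 * S.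
  move=> c n nK; exists (\sum_(n.+1 <= m < K.+1) c m *: NT p q (1 + n.+1) (m - n.+1)).
  rewrite /Atrunc; under eq_bigr do rewrite Theta_NT.
  rewrite (regroup _ _ _ (K:=n.+1)) //; congr (_ + _).
have coef : forall n, (n < l)%N -> Amul q a b n = d n.
  move=> n nl; have nK : (n <= K)%N by rewrite -ltnS -lK.
  have [Sa eA] := split_tr a n nK; have [Sb eB] := split_tr b n nK.
  rewrite /Amul; apply: (newton_uniq' (K:=n.+1) (N:=l)
     (R := NT p q (1 + n.+1) (l - n.+1) * R - (Sa * Atrunc q b n + Atrunc q a n * Sb + NT p q 1 n.+1 * Sa * Sb))) => //.
  have eNT : NT p q 1 l = NT p q 1 n.+1 * NT p q (1 + n.+1) (l - n.+1) by rewrite -NT_add subnKC.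
  have eP' : Atrunc q a n * Atrunc q b n = P - NT p q 1 n.+1 * (Sa * Atrunc q b n + Atrunc q a n * Sb + NT p q 1 n.+1 * Sa * Sb).
    rewrite /P eA eB; ring.
  by rewrite eP' eP eNT; ring.
rewrite {1}/nsum.
have -> : \sum_(i < l) Amul q a b i * (Th i).[node l] = \sum_(i < l) d i * (Th i).[node l].
  by apply: eq_bigr => i _; rewrite coef.
have : P.[node l] = \sum_(i < l) d i * (Th i).[node l].
  rewrite eP hornerD hornerM horner_sum.
  have -> : (NT p q 1 l).[node l] = 0 by rewrite -Theta_NT Theta_vanish.
  rewrite mul0r addr0; apply: eq_bigr => i _; by rewrite hornerZ Theta_NT.
move=> <-; rewrite /P hornerM !nsum_trunc //; by rewrite -lK.
Qed.

End S.


Section M.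
Variable p : nat.
Variable q : int.
Hypothesis pr : prime p.
Hypothesis podd : odd p.
Hypothesis qprim : primitive_mod q (p ^ 2).
Local Notation Z := (Zpl p).
Local Notation node := (qnode p q).
Local Notation Th := (Theta p q).
Local Notation A := (Aop p).
Local Notation Q := (q%:~R : Z).
Variable psi : Z -> A.
Hypothesis hpsi : adams_ops q psi.
Variable M : lmodType Z.
Variable act : A -> M -> M.
Hypothesis hact : discrete_Amodule q act.

Lemma Aop_eq (a b : A) : (forall l, (0 < l)%N -> nsum q l a = nsum q l b) -> a = b.
Proof.
move=> h; apply: functional_extensionality => i; apply/eqP; rewrite -subr_eq0; apply/eqP.
apply: (@tri p q pr podd qprim i.+1 (fun n => a n - b n)) => // l l0 _.
by rewrite nsumB h // subrr.
Qed.

Lemma psi_node j l : zunit j -> (0 < l)%N -> nsum q l (psi j) = zpow j (qexp l).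
Proof. by move=> u l0; rewrite -(Aev_node q pr podd _ l0) hpsi. Qed.

Lemma psi_one : psi 1 = Aone p.
Proof.
apply: Aop_eq => l l0; rewrite psi_node ?zunit1 // zpow1 nsum_one //.
Qed.

Lemma psi_mul j j' : zunit j -> zunit j' -> psi (j * j') = Amul q (psi j) (psi j').
Proof.
move=> u u'; apply: Aop_eq => l l0.
rewrite Amul_node // !psi_node ?zunitM // zpowM //.
Qed.

Let hA : Amodule q act := hact.1.
Lemma act_addx a x y : act a (x + y) = act a x + act a y.
Proof. by case: hA. Qed.
Lemma act_Aadd a b x : act (Aadd a b) x = act a x + act b x.
Proof. by case: hA. Qed.
Lemma act_Ascale c a x : act (Ascale c a) x = c *: act a x.
Proof. by case: hA. Qed.
Lemma act_one x : act (Aone p) x = x.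
Proof. by case: hA. Qed.
Lemma act_mul a b x : act (Amul q a b) x = act a (act b x).
Proof. by case: hA. Qed.

Lemma act_scalex a c x : act a (c *: x) = c *: act a x.
Proof.
rewrite -{1}(act_one x) -act_Ascale -act_mul.
have -> : Amul q a (Ascale c (Aone p)) = Ascale c a.
  apply: Aop_eq => l l0; rewrite Amul_node // !nsumZ nsum_one //; ring.
by rewrite act_Ascale.
Qed.

Lemma act_zero x : act (fun _ => 0) x = 0.
Proof.
have e : Aadd (fun _ : nat => 0 : Z) (fun _ => 0) = (fun _ => 0).
  by apply: functional_extensionality => i; rewrite /Aadd addr0.
have := act_Aadd (fun _ => 0) (fun _ => 0) x; rewrite e.
by move/eqP; rewrite -subr_eq subrr eq_sym => /eqP.
Qed.

Lemma act_sum I (s : seq I) (F : I -> A) x :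
  act (fun m => \sum_(i <- s) F i m) x = \sum_(i <- s) act (F i) x.
Proof.
elim: s => [|i s IH].
  rewrite big_nil -(act_zero x); congr act.
  by apply: functional_extensionality => m; rewrite big_nil.
rewrite big_cons -IH -act_Aadd; congr act.
by apply: functional_extensionality => m; rewrite big_cons.
Qed.

Lemma act_agree x n : (forall a, inAfilt n a -> act a x = 0) ->
  forall a b, (forall l, (0 < l)%N -> (l <= n)%N -> nsum q l a = nsum q l b) ->
  act a x = act b x.
Proof.
move=> hn a b h.
have e : a = Aadd b (fun m => a m - b m).
  by apply: functional_extensionality => m; rewrite /Aadd addrC subrK.
rewrite {1}e act_Aadd (hn (fun m => a m - b m)) ?addr0 // => i iN.
apply: (@tri p q pr podd qprim n (fun m => a m - b m)) => // l l0 ln.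
by rewrite nsumB h // subrr.
Qed.

Definition Acomb (s : seq (Z * Z)) : A := fun m => \sum_(cj <- s) cj.1 * psi cj.2 m.

Lemma act_Acomb s x : act (Acomb s) x = \sum_(cj <- s) cj.1 *: act (psi cj.2) x.
Proof.
rewrite /Acomb act_sum; apply: eq_bigr => cj _.
by rewrite -act_Ascale.
Qed.

Lemma nsum_Acomb s l : nsum q l (Acomb s) = \sum_(cj <- s) cj.1 * nsum q l (psi cj.2).
Proof.
rewrite /Acomb nsum_sum; apply: eq_bigr => cj _.
by rewrite -nsumZ.
Qed.

Lemma inRxP x y : inRx (fun j => act (psi j)) x y <->
  exists s, all (fun cj => zunit cj.2) s /\ y = act (Acomb s) x.
Proof.
split; case=> s [hs ->]; exists s; split => //; by rewrite act_Acomb.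
Qed.

Definition polyop (B : {poly Z}) N : A :=
  Acomb [seq (B`_i, Q ^+ i) | i <- iota 0 N].

Lemma sum_iota_map (R : zmodType) (G : nat -> R) N :
  \sum_(i <- iota 0 N) G i = \sum_(i < N) G i.
Proof. by rewrite -(big_mkord xpredT) /index_iota subn0. Qed.

Lemma polyop_unit (B : {poly Z}) N : all (fun cj => zunit cj.2) [seq (B`_i, Q ^+ i) | i <- iota 0 N].
Proof.
apply/allP => cj /mapP [i _ ->] /=; apply: zunitX; exact: (zunitQ pr podd qprim).
Qed.

Lemma nsum_polyop (B : {poly Z}) N l : (0 < l)%N -> (size B <= N)%N ->
  nsum q l (polyop B N) = B.[node l].
Proof.
move=> l0 sB; rewrite /polyop nsum_Acomb big_map sum_iota_map (horner_coef_wide _ sB).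
apply: eq_bigr => i _ /=; rewrite psi_node ?zunitX ?(zunitQ pr podd qprim) //.
by rewrite zpowX ?(zunitQ pr podd qprim).
Qed.

Lemma size_Atrunc (a : A) K : (size (Atrunc q a K) <= K.+1)%N.
Proof.
rewrite /Atrunc; apply: leq_trans (size_sum _ _ _) _; apply/bigmax_leqP => i _.
apply: leq_trans (size_scale_leq _ _) _.
by rewrite /Theta size_prod_XsubC size_iota subn1 /=.
Qed.

Lemma Ax_in_Rx x n : (forall a, inAfilt n a -> act a x = 0) ->
  forall b, act b x = act (polyop (Atrunc q b n) n.+1) x.
Proof.
move=> hn b; apply: (act_agree hn) => l l0 ln.
by rewrite nsum_polyop ?size_Atrunc // nsum_trunc // leqW.
Qed.

Lemma Ax_inRx x n : (forall a, inAfilt n a -> act a x = 0) ->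
  forall b, inRx (fun j => act (psi j)) x (act b x).
Proof.
move=> hn b; apply/inRxP; exists [seq ((Atrunc q b n)`_i, Q ^+ i) | i <- iota 0 n.+1].
split; first exact: polyop_unit.
exact: Ax_in_Rx hn b.
Qed.

Local Notation Psi := (fun j => act (psi j)).

Lemma part_a x : bousfield_a Psi x.
Proof.
have [n hn] := hact.2 x.
set g := [seq act (psi (Q ^+ i)) x | i <- iota 0 n.+1].
have sg : size g = n.+1 by rewrite size_map size_iota.
have conv : forall c : nat -> Z, \sum_(i < size g) c i *: nth 0 g i =
    \sum_(i < n.+1) c i *: act (psi (Q ^+ i)) x.
  move=> c; rewrite sg; apply: eq_bigr => i _.
  by rewrite (nth_map 0%N) ?size_iota // nth_iota.
exists g => y; split.
- move/inRxP; case=> s [_ ->].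
  exists (fun i => (Atrunc q (Acomb s) n)`_i); rewrite conv.
  rewrite (Ax_in_Rx hn) /polyop act_Acomb.
  by rewrite big_map sum_iota_map.
- case=> c ->; apply/inRxP; exists [seq (c i, Q ^+ i) | i <- iota 0 n.+1].
  split; first by apply/allP => cj /mapP [i _ ->] /=; apply: zunitX; exact: (zunitQ pr podd qprim).
  by rewrite conv act_Acomb big_map sum_iota_map.
Qed.


Lemma gamma_exists (cs : seq Z) : all (fun c => c != 0) cs ->
  exists N : nat, (0 < N)%N /\ exists g : Z -> Z, forall c, c \in cs -> g c * c = N%:R.
Proof.
elim: cs => [|c cs IH] /=.
  by move=> _; exists 1%N; split => //; exists (fun _ => 0) => c.
case/andP => c0 /IH [N [N0 [g hg]]].
set u : Z := ((Num.sg (numq (zval c))) * denq (zval c))%:~R.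
have hu : u * c = (`|numq (zval c)|%N)%:R.
  apply: zval_inj; rewrite zvalM zval_int zval_nat.
  rewrite -[(`|numq (zval c)|%N)%:R]/((`|numq (zval c)|%N)%:~R : rat).
  by rewrite abszE intr_norm normrEsg intrM intr_sg numqE; ring.
have na0 : (0 < `|numq (zval c)|)%N.
  by rewrite absz_gt0 numq_eq0 zval_eq0.
exists (N * `|numq (zval c)|)%N; split; first by rewrite muln_gt0 N0.
exists (fun c' => if c' == c then N%:R * u else g c' * (`|numq (zval c)|%N)%:R).
move=> c'; rewrite inE; case: eqP => [-> _|_ /= hc'].
  by rewrite -mulrA hu natrM.
by rewrite mulrAC hg // natrM.
Qed.

Section PartB.
Variable n : nat.
Definition W (r : nat) : {poly Z} := \prod_(i <- index_iota 1 n.+1 | i != r) ('X - (node i)%:P).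

Lemma size_W r : (size (W r) <= n.+1)%N.
Proof.
rewrite /W -big_filter size_prod_XsubC ltnS size_filter.
apply: leq_trans (count_size _ _) _; by rewrite size_iota subn1.
Qed.

Lemma W_vanish r l : (0 < l)%N -> (l <= n)%N -> l != r -> (W r).[node l] = 0.
Proof.
move=> l0 ln lr; rewrite /W horner_prod -big_filter (bigD1_seq l) /=.
- by rewrite hornerXsubC subrr mul0r.
- by rewrite mem_filter lr mem_index_iota l0 ltnS.
- by rewrite filter_uniq // iota_uniq.
Qed.

Lemma W_neq0 r : (0 < r)%N -> (W r).[node r] != 0.
Proof.
move=> r0; rewrite /W horner_prod -zval_eq0 zval_prod prodf_seq_neq0.
apply/allP => i; rewrite mem_index_iota => /andP[i1 _]; apply/implyP => ir.
rewrite hornerXsubC zvalB subr_eq0; apply/eqP => /zval_inj e.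
by move: ir; rewrite (qnode_inj pr podd qprim r0 i1 e) eqxx.
Qed.
End PartB.

Lemma part_b x : bousfield_b Psi x.
Proof.
move=> j hj y /inRxP [s0 [_ ->]]; set b := Acomb s0.
have [n hn] := hact.2 x.
set c := fun r => (W n r).[node r].
have [N [N0 [g hg]]] : exists N : nat, (0 < N)%N /\ exists g : Z -> Z,
    forall c0, c0 \in [seq c r | r <- iota 1 n] -> g c0 * c0 = N%:R.
  apply: gamma_exists; apply/allP => c0 /mapP [r hr ->].
  by apply: W_neq0; move: hr; rewrite mem_iota => /andP[].
have hgr : forall r, (0 < r)%N -> (r <= n)%N -> g (c r) * c r = N%:R.
  by move=> r r0 rn; apply: hg; apply: map_f; rewrite mem_iota r0 add1n ltnS.
set al := fun r => Ascale (nsum q r b * g (c r)) (polyop (W n r) n.+1).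
have nal : forall r l, (0 < l)%N -> nsum q l (al r) = nsum q r b * g (c r) * (W n r).[node l].
  by move=> r l l0; rewrite /al nsumZ nsum_polyop // size_W.
exists N; split => //.
exists [seq (act (al r) x, qexp r) | r <- iota 1 n]; split.
- move=> e /mapP [r hr ->] /=; move: hr; rewrite mem_iota add1n ltnS => /andP[r0 rn].
  split; first exact: Ax_inRx hn _.
  exists 1%N; split => //; rewrite scale1r.
  rewrite -act_mul -act_Ascale; apply/eqP; rewrite subr_eq0; apply/eqP.
  apply: (act_agree hn) => l l0 ln.
  rewrite Amul_node // psi_node // nsumZ !nal //.
  case: (eqVneq l r) => [->//|lr]; by rewrite W_vanish // !mulr0.
- exists 1%N; split => //; rewrite scale1r big_map -act_sum -act_Ascale.
  apply/eqP; rewrite subr_eq0; apply/eqP.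
  apply: (act_agree hn) => l l0 ln.
  rewrite nsumZ nsum_sum (bigD1_seq l) /=; last by rewrite iota_uniq.
    rewrite nal // big1_seq ?addr0.
      by rewrite -mulrA hgr // mulrC.
    move=> r /andP[rl hr]; move: hr; rewrite mem_iota add1n ltnS => /andP[r0 rn].
    by rewrite nal // W_vanish // 1?eq_sym // mulr0.
  by rewrite mem_iota l0 add1n ltnS.
Qed.


Definition pdiv K (z : Z) := exists c : Z, z = (p ^ K)%:R * c.

Lemma pdivD K a b : pdiv K a -> pdiv K b -> pdiv K (a + b).
Proof. by move=> [c ->] [d ->]; exists (c + d); rewrite mulrDr. Qed.
Lemma pdivN K a : pdiv K a -> pdiv K (- a).
Proof. by move=> [c ->]; exists (- c); rewrite mulrN. Qed.
Lemma pdivB K a b : pdiv K a -> pdiv K b -> pdiv K (a - b).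
Proof. by move=> ha hb; apply: pdivD => //; apply: pdivN. Qed.
Lemma pdivMr K a b : pdiv K a -> pdiv K (a * b).
Proof. by move=> [c ->]; exists (c * b); rewrite mulrA. Qed.
Lemma pdivMl K a b : pdiv K a -> pdiv K (b * a).
Proof. by move=> h; rewrite mulrC; apply: pdivMr. Qed.
Lemma pdiv_weak K K' a : (K' <= K)%N -> pdiv K a -> pdiv K' a.
Proof.
move=> h [c ->]; exists ((p ^ (K - K'))%:R * c).
by rewrite mulrA -natrM -expnD subnKC.
Qed.
Lemma pdiv0 K : pdiv K 0.
Proof. by exists 0; rewrite mulr0. Qed.
Lemma pdiv_sum K I (r : seq I) (F : I -> Z) : (forall i, pdiv K (F i)) -> pdiv K (\sum_(i <- r) F i).
Proof.
move=> h; elim: r => [|i r IH]; first by rewrite big_nil; apply: pdiv0.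
by rewrite big_cons; apply: pdivD.
Qed.

Lemma pexp_neq0 E : ((p ^ E)%:R : Z) != 0.
Proof.
rewrite -zval_eq0 zval_nat pnatr_eq0 expn_eq0 negb_and; apply/orP; left.
by rewrite -lt0n prime_gt0.
Qed.

Lemma pdiv_cancel Mx E z : pdiv (Mx + E) ((p ^ E)%:R * z) -> pdiv Mx z.
Proof.
case=> c h; exists c; apply: (zmulIf (pexp_neq0 E)).
by rewrite h mulrA -natrM -expnD addnC.
Qed.

Lemma nonzero_pow (d : Z) : d != 0 -> exists E (u : Z), (p ^ E)%:R = d * u.
Proof.
move=> d0; set x := zval d.
have x0 : x != 0 by rewrite zval_eq0.
have n0 : (0 < `|numq x|)%N by rewrite absz_gt0 numq_eq0.
have [m cm em] := pfactor_coprime pr n0.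
set e := logn p `|numq x|.
have hu : ((p ^ e)%:R / x) \in plocal p.
  apply: (@plocal_dvd p _ (Posz m)); first by [].
  exists (Num.sg (numq x) * denq x).
  have : ((`|numq x|%N)%:R : rat) = (m%:R * (p ^ e)%:R) by rewrite -natrM -em.
  rewrite -[(`|numq x|%N)%:R]/((`|numq x|%N)%:~R : rat) abszE intr_norm normrEsg.
  rewrite -[(Posz m)%:~R]/(m%:R : rat) intrM intr_sg.
  set sg := Num.sg _; rewrite numqE => h.
  have dd0 : (denq x)%:~R != 0 :> rat by rewrite intr_eq0 denq_neq0.
  have -> : sg * (denq x)%:~R = sg * (x * (denq x)%:~R) / x by field.
  by rewrite h; field.
exists e, (insubd 0 ((p ^ e)%:R / x)).
apply: zval_inj; rewrite zvalM zval_nat insubdK //.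
by rewrite /x mulrC divfK.
Qed.

Lemma tri_div n : exists F, forall Mx (a : A), (forall l, (0 < l)%N -> (l <= n)%N -> pdiv (Mx + F) (nsum q l a)) ->
  forall i, (i < n)%N -> pdiv Mx (a i).
Proof.
elim: n => [|n [F hF]]; first by exists 0%N.
have [E [u hu]] := nonzero_pow (Theta_neq0 pr podd qprim (ltnSn n)).
exists (F + E)%N => Mx a h.
have h1 : forall i, (i < n)%N -> pdiv (Mx + E) (a i).
  apply: hF => l l0 ln; rewrite -addnA (addnC E); apply: h => //; exact: leqW.
move=> i; rewrite ltnS leq_eqVlt => /orP[/eqP ->|]; last first.
  move=> hi; apply: pdiv_weak (h1 i hi); exact: leq_addr.
apply: (pdiv_cancel (E := E)); rewrite hu mulrC mulrA.
apply: pdivMr.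
have := h n.+1 isT (leqnn _); rewrite /nsum big_ord_recr /= => hs.
have -> : a n * (Th n).[node n.+1] =
   (\sum_(i < n) a i * (Th i).[node n.+1] + a n * (Th n).[node n.+1]) - \sum_(i < n) a i * (Th i).[node n.+1].
  by rewrite addrAC subrr add0r.
apply: pdivB.
  by apply: pdiv_weak hs; rewrite leq_add2l leq_addl.
apply: pdiv_sum => i0; apply: pdivMr; exact: h1.
Qed.

Lemma zpow_pdiv K (j j' : Z) k : zunit j -> zunit j' -> pdiv K (j - j') -> pdiv K (zpow j k - zpow j' k).
Proof.
move=> u u' h; case: k => t /=; first by rewrite subrXX; apply: pdivMr.
rewrite subrXX; apply: pdivMr.
have -> : zinv j - zinv j' = (j' - j) * (zinv j * zinv j').
  apply: zval_inj; rewrite zvalB !zvalM zvalB !zinvE //.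
  have := zunit_neq0 u; have := zunit_neq0 u' => a0 b0; field.
  by apply/andP.
apply: pdivMr; rewrite -opprB; exact: pdivN.
Qed.

Lemma part_c x : bousfield_c Psi x.
Proof.
move=> m _; have [n hn] := hact.2 x; have [F hF] := tri_div n.
exists (m + F)%N => j j' u u' [c0 hc] y /inRxP [s0 [_ ->]]; set b := Acomb s0.
set del := fun i => psi j i - psi j' i.
have hdel : forall i, (i < n)%N -> pdiv m (del i).
  apply: hF => l l0 ln; rewrite nsumB !psi_node //.
  by apply: zpow_pdiv => //; exists c0.
set ze := fun i => insubd (0 : Z) (zval (del i) / (p ^ m)%:R).
have hze : forall i, (i < n)%N -> (p ^ m)%:R * ze i = del i.
  move=> i iN; have [c1 e1] := hdel i iN.
  have : zval (del i) / (p ^ m)%:R = zval c1.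
    rewrite e1 zvalM zval_nat mulrC mulKf //.
    by have := pexp_neq0 m; rewrite -zval_eq0 zval_nat.
  move=> e2; rewrite /ze e2.
  have -> : insubd (0 : Z) (zval c1) = c1 by apply: zval_inj; rewrite insubdK // zvalP.
  by rewrite e1.
exists (act (Amul q ze b) x); split; first exact: Ax_inRx hn _.
rewrite -!act_mul -act_Ascale.
have -> : act (Amul q (psi j) b) x = act (Aadd (Amul q (psi j') b) (Ascale (p ^ m)%:R (Amul q ze b))) x.
  apply: (act_agree hn) => l l0 ln.
  rewrite nsumD nsumZ !Amul_node // !psi_node //.
  have : (p ^ m)%:R * nsum q l ze = zpow j (qexp l) - zpow j' (qexp l).
    rewrite -!psi_node // -nsumB /nsum mulr_sumr; apply: eq_bigr => i _.
    by rewrite mulrA hze //; apply: leq_trans (ltn_ord i) ln.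
  move=> e; rewrite mulrA e; ring.
by rewrite act_Aadd addrC addKr.
Qed.

End M.

Theorem theorem4p2 (p : nat) (q : int) (psi : Zpl p -> Aop p)
    (M : lmodType (Zpl p)) (act : Aop p -> M -> M) :
  prime p -> odd p -> primitive_mod q (p ^ 2) ->
  adams_ops q psi ->
  discrete_Amodule q act ->
  Bousfield_module (fun j : Zpl p => act (psi j)).
Proof.
move=> pr podd qprim hpsi hact; split.
- split.
  + by move=> j _ x y; apply: (act_addx hact).
  + by move=> j _ c x; apply: (act_scalex pr podd qprim hact).
  + by move=> x; rewrite (psi_one pr podd qprim hpsi) (act_one hact).
  + by move=> j j' u u' x; rewrite (psi_mul pr podd qprim hpsi u u') (act_mul hact).
- move=> x; split.
  + exact: (part_a pr podd qprim hpsi hact).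
  + exact: (part_b pr podd qprim hpsi hact).
  + exact: (part_c pr podd qprim hpsi hact).
Qed.
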